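(* Let $s,d,k,q$ be positive integers with $q\ge s$ and $d\mid(q-s)$. Define $t_i=q$ if $d\mid i$ and $t_i=s$ if $d\nmid i$, for $1\le i\le k$. Then $$C_k(t_1,\dots,t_k)\le\left(s+k+\frac{q-s}{d}-1\right)_k.$$
   Context: For nonnegative integers $c_1,\dots,c_k$ with $\sum_i ic_i=k$, let $N(c_1,\dots,c_k)=\frac{k!}{1^{c_1}c_1!\,2^{c_2}c_2!\cdots k^{c_k}c_k!}$ be the number of permutations in the symmetric group $S_k$ having exactly $c_i$ cycles of length $i$ for each $i$. Define $C_k(t_1,\dots,t_k)=\sum_{\sum ic_i=k}N(c_1,\dots,c_k)t_1^{c_1}\cdots t_k^{c_k}$. For real $t$, $(t)_k=t(t-1)\cdots(t-k+1)$. *)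

(* Defs.v *)
From mathcomp Require Import all_boot all_order all_algebra.
Set Implicit Arguments. Unset Strict Implicit. Unset Printing Implicit Defensive.
Import Order.TTheory GRing.Theory Num.Theory.
Local Open Scope ring_scope.

(* A cycle type for S_k is encoded as c : {ffun 'I_k -> 'I_k.+1}, where
   c i is the number c_{i+1} of cycles of length i+1 (each c_j <= k, so the
   bound 'I_k.+1 loses nothing). *)
Definition cycle_type_ok (k : nat) (c : {ffun 'I_k -> 'I_k.+1}) : bool :=
  (\sum_(i < k) (i.+1 * c i)%N)%N == k.

(* N(c_1,...,c_k) = k! / prod_j (j^{c_j} c_j!)  (natural-number division;
   the division is exact, being the number of permutations of that type). *)
Definition Ncyc (k : nat) (c : {ffun 'I_k -> 'I_k.+1}) : nat :=
  (k`! %/ \prod_(i < k) (i.+1 ^ c i * (c i)`!))%N.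

Definition Ck {R : ringType} (k : nat) (t : nat -> R) : R :=
  \sum_(c : {ffun 'I_k -> 'I_k.+1} | cycle_type_ok c)
     (Ncyc c)%:R * \prod_(i < k) (t i.+1) ^+ (c i).

Definition falling {R : ringType} (x : R) (k : nat) : R :=
  \prod_(j < k) (x - j%:R).

(* Main.v *)
Require Import Defs.
From mathcomp Require Import all_boot all_order all_algebra.
From mathcomp Require Import ring lra.
Set Implicit Arguments. Unset Strict Implicit. Unset Printing Implicit Defensive.
Import Order.TTheory GRing.Theory Num.Theory.
Local Open Scope ring_scope.

Section Gen.
Variable R : realFieldType.

Definition lowz K (E : {poly R}) := forall n, (n <= K)%N -> E`_n = 0.
Definition sol K (F S : {poly R}) := lowz K ('X * F^`() - F * S).

Lemma lowzMr K E G : lowz K E -> lowz K (E * G).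
Proof.
move=> hE n hn; rewrite coefM big1 // => j _; rewrite hE ?mul0r //.
by apply: leq_trans hn; rewrite -ltnS.
Qed.

Lemma lowzD K E G : lowz K E -> lowz K G -> lowz K (E + G).
Proof. by move=> h1 h2 n hn; rewrite coefD h1 ?h2 ?addr0. Qed.

Lemma lowzB K E G : lowz K E -> lowz K G -> lowz K (E - G).
Proof. by move=> h1 h2 n hn; rewrite coefB h1 ?h2 ?subr0. Qed.

Lemma solM K F G S1 S2 : sol K F S1 -> sol K G S2 -> sol K (F * G) (S1 + S2).
Proof.
move=> h1 h2; rewrite /sol.
have -> : 'X * (F * G)^`() - F * G * (S1 + S2) =
  ('X * F^`() - F * S1) * G + G * ('X * G^`() - G * S2) * 0 + F * ('X * G^`() - G * S2).
  by rewrite derivM; ring.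
apply: lowzD; last by rewrite mulrC; apply: lowzMr.
by rewrite mulr0 addr0; apply: lowzMr.
Qed.

Lemma sol_congr K F S1 S2 : sol K F S1 -> lowz K (S1 - S2) -> sol K F S2.
Proof.
move=> h1 h2; rewrite /sol.
have -> : 'X * F^`() - F * S2 = ('X * F^`() - F * S1) + (S1 - S2) * F by ring.
by apply: lowzD => //; apply: lowzMr.
Qed.

Lemma sol_prod K (I : finType) (Fs Ss : I -> {poly R}) :
  (forall i, sol K (Fs i) (Ss i)) -> sol K (\prod_i Fs i) (\sum_i Ss i).
Proof.
move=> h; apply: (big_ind2 (sol K)) => //.
  by move=> n _; rewrite mulr0 derivC mulr0 subr0 coef0.
by move=> a b c d; apply: solM.
Qed.

Lemma coef_solE (F S : {poly R}) n :
  ('X * F^`() - F * S)`_n = F`_n *+ n - \sum_(j < n.+1) F`_j * S`_(n - j).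
Proof.
by rewrite coefB coefXM coefM; case: n => [|n] //=; rewrite ?mulr0n // coef_deriv.
Qed.

Lemma solP K (F S : {poly R}) : (forall n, (n <= K)%N ->
  F`_n *+ n = \sum_(j < n.+1) F`_j * S`_(n - j)) -> sol K F S.
Proof. by move=> h n hn; rewrite coef_solE h // subrr. Qed.

Lemma sol_uniq K (F G S : {poly R}) : sol K F S -> sol K G S -> S`_0 = 0 -> F`_0 = G`_0 ->
  forall n, (n <= K)%N -> F`_n = G`_n.
Proof.
move=> hF hG hS0 h0; rewrite /sol in hF hG.
have hH : sol K (F - G) S.
  rewrite /sol.
  have -> : 'X * (F - G)^`() - (F - G) * S =
     ('X * F^`() - F * S) - ('X * G^`() - G * S) by rewrite derivB; ring.
  exact: lowzB.
suff H : forall n, (n <= K)%N -> forall j, (j <= n)%N -> (F - G)`_j = 0.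
  by move=> n hn; apply/eqP; rewrite -subr_eq0 -coefB (H n hn n).
elim=> [|n IH] hn j hj.
  by move: hj; rewrite leqn0 => /eqP ->; rewrite coefB h0 subrr.
move: hj; rewrite leq_eqVlt => /orP [/eqP ->|hj]; last first.
  by apply: IH => //; apply: ltnW.
have := hH n.+1 hn; rewrite coef_solE big_ord_recr /= subnn hS0 mulr0 addr0.
rewrite big1 ?subr0; last first.
  move=> i _; rewrite IH ?mul0r //; first exact: ltnW.
  by rewrite -ltnS.
by move/eqP; rewrite mulrn_eq0 /= => /eqP.
Qed.

End Gen.
Section Expl.
Variable R : realFieldType.

Definition Sf K (f : nat -> R) : {poly R} := \poly_(i < K.+1) (if i == 0%N then 0 else f i).
Definition rr (a : R) n := \prod_(j < n) ((a + j%:R) / (j.+1)%:R).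
Definition Rp K a := \poly_(n < K.+1) rr a n.
Definition Bp K d a := \poly_(n < K.+1) (if (d %| n)%N then rr a (n %/ d)%N else 0).

Lemma Sf0 K f : (Sf K f)`_0 = 0.
Proof. by rewrite coef_poly. Qed.

Lemma SfD K f g : Sf K f + Sf K g = Sf K (fun i => f i + g i).
Proof.
apply/polyP=> i; rewrite coefD !coef_poly.
by case: (i < K.+1)%N; case: (i == 0%N); rewrite ?addr0.
Qed.

Lemma Sf_ext K f g : (forall i, i != 0%N -> f i = g i) -> Sf K f = Sf K g.
Proof.
move=> h; apply/polyP=> i; rewrite !coef_poly.
case: (i < K.+1)%N => //; case: eqP => // /eqP; exact: h.
Qed.

Lemma rrS a n : rr a n.+1 = rr a n * ((a + n%:R) / (n.+1)%:R).
Proof. by rewrite /rr big_ord_recr. Qed.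

Lemma rr_rec a n : rr a n *+ n = a * \sum_(j < n) rr a j.
Proof.
elim: n => [|n IH]; first by rewrite big_ord0 mulr0 mulr0n.
rewrite rrS big_ord_recr /= mulrDr -IH.
have h : (n.+1)%:R != 0 :> R by rewrite pnatr_eq0.
rewrite -mulrnAr -[(_ / _) *+ _]mulr_natr divfK // mulrDr addrC mulr_natr mulrC.
done.
Qed.

Lemma rr_ge0 a n : 0 <= a -> 0 <= rr a n.
Proof.
move=> ha; apply: prodr_ge0 => j _; apply: divr_ge0; last exact: ler0n.
by apply: addr_ge0 => //; apply: ler0n.
Qed.

Lemma rr0 a : rr a 0 = 1.
Proof. by rewrite /rr big_ord0. Qed.

Lemma rr_mono a n p : 1 <= a -> (n <= p)%N -> rr a n <= rr a p.
Proof.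
move=> ha; have ha0 : 0 <= a by apply: le_trans ha.
elim: p => [|p IH]; first by rewrite leqn0 => /eqP ->.
rewrite leq_eqVlt => /orP [/eqP ->//|]; rewrite ltnS => /IH h.
apply: (le_trans h); rewrite rrS ler_peMr ?rr_ge0 //.
rewrite ler_pdivlMr ?ltr0n // mul1r -natr1; lra.
Qed.

Lemma Rp_sol K a : sol K (Rp K a) (Sf K (fun _ => a)).
Proof.
apply: solP => n hn; rewrite coef_poly ltnS hn big_ord_recr /= subnn Sf0 mulr0 addr0.
rewrite rr_rec mulr_sumr; apply: eq_bigr => j _.
have h1 : (j < K.+1)%N by rewrite ltnS (leq_trans (ltnW (ltn_ord j)) hn).
have h2 : (n - j < K.+1)%N by rewrite ltnS (leq_trans (leq_subr _ _) hn).
by rewrite !coef_poly h1 h2 subn_eq0 leqNgt ltn_ord /= mulrC.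
Qed.

Lemma Rp0 K a : (Rp K a)`_0 = 1.
Proof. by rewrite coef_poly rr0. Qed.

Lemma sum_dvd d N (f : nat -> R) : (0 < d)%N ->
  \sum_(j < d * N) (if (d %| j)%N then f (j %/ d)%N else 0) = \sum_(i < N) f i.
Proof.
case: d => // d _; elim: N => [|N IH]; first by rewrite muln0 !big_ord0.
rewrite mulnS addnC big_split_ord /= IH [RHS]big_ord_recr /=; congr (_ + _).
rewrite big_ord_recl /= addn0 dvdn_mulr // mulKn //.
rewrite big1 ?addr0 // => i _; rewrite /bump /= add1n.
rewrite dvdn_addr ?dvdn_mulr //; case: ifP => // /dvdn_leq; rewrite ltn0Sn => /(_ isT).
by rewrite ltnNge (ltn_ord i).
Qed.

Lemma Bp_sol K d (m : nat) : (0 < d)%N ->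
  sol K (Bp K d m%:R) (Sf K (fun i => if (d %| i)%N then (d * m)%:R else 0)).
Proof.
move=> hd; apply: solP => n hn; rewrite coef_poly ltnS hn big_ord_recr /= subnn Sf0 mulr0 addr0.
have E : forall j : 'I_n, (Bp K d m%:R)`_j * (Sf K (fun i => if (d %| i)%N then (d * m)%:R else 0))`_(n - j)
   = if (d %| n)%N then (if (d %| j)%N then rr m%:R (j %/ d)%N * (d * m)%:R else 0) else 0.
  move=> j.
  have h1 : (j < K.+1)%N by rewrite ltnS (leq_trans (ltnW (ltn_ord j)) hn).
  have h2 : (n - j < K.+1)%N by rewrite ltnS (leq_trans (leq_subr _ _) hn).
  rewrite !coef_poly h1 h2 subn_eq0 leqNgt ltn_ord /=.
  case hdn: (d %| n)%N.
    rewrite dvdn_subr ?(ltnW (ltn_ord j)) //.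
    by case: ifP; rewrite ?mulr1 ?mul0r.
  case: ifP => hj; last by rewrite mul0r.
  case: ifP => hj'; last by rewrite mulr0.
  by have := dvdn_add hj hj'; rewrite subnKC ?(ltnW (ltn_ord j)) // hdn.
rewrite (eq_bigr _ (fun j _ => E j)).
case hdn: (d %| n)%N; last by rewrite big1 // mul0rn.
move: hdn => /dvdnP [N ->]; rewrite mulnK // mulnC.
rewrite (sum_dvd N (fun i => rr m%:R i * (d * m)%:R) hd).
rewrite mulnC mulrnA rr_rec -mulr_suml natrM -mulr_natr; ring.
Qed.

Lemma Bp0 K d a : (Bp K d a)`_0 = 1.
Proof. by rewrite coef_poly dvdn0 div0n rr0. Qed.

End Expl.
Section Fact.
Variable R : realFieldType.

Definition Fac K (c : R) e := \sum_(j < K.+1) (c ^+ j / (j`!)%:R) *: 'X^(e * j).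
Definition Pt K (t : nat -> R) := \prod_(i < K) Fac K (t i.+1 / (i.+1)%:R) i.+1.

Lemma Fac_sol K c e : (0 < e)%N -> sol K (Fac K c e) ((e%:R * c) *: 'X^e).
Proof.
move=> he.
have D : 'X * (Fac K c e)^`() =
    \sum_(j < K) ((e%:R * c) * (c ^+ j / j`!%:R)) *: 'X^(e * j.+1).
  rewrite /Fac raddf_sum mulr_sumr big_ord_recl /= derivZ derivXn muln0 mulr0n scaler0 mulr0 add0r.
  apply: eq_bigr => j _; rewrite /bump /= add1n derivZ derivXn -scalerAr mulrnAr.
  have hp : (0 < e * j.+1)%N by rewrite muln_gt0 he.
  rewrite -exprS prednK // -scalerMnr scalerMnl; congr (_ *: _).
  rewrite factS natrM exprS -mulr_natr natrM.
  have h1 : (j.+1)%:R != 0 :> R by rewrite pnatr_eq0.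
  have h2 : (j`!)%:R != 0 :> R by rewrite pnatr_eq0 -lt0n fact_gt0.
  by field; rewrite h2 /= addrC natr1 pnatr_eq0.
have M : Fac K c e * ((e%:R * c) *: 'X^e) =
    \sum_(j < K.+1) ((e%:R * c) * (c ^+ j / j`!%:R)) *: 'X^(e * j.+1).
  rewrite /Fac mulr_suml; apply: eq_bigr => i _.
  by rewrite -scalerAr -scalerAl scalerA -exprD mulnS addnC mulrC.
rewrite /sol D M big_ord_recr /= opprD addrA subrr sub0r => n hn.
rewrite coefN coefZ coefXn.
have : (n < e * K.+1)%N.
  by apply: (leq_trans _ (leq_pmull _ he)); rewrite ltnS.
by rewrite ltn_neqAle => /andP [/negbTE -> _]; rewrite mulr0 oppr0.
Qed.

Lemma Pt_sol K t : sol K (Pt K t) (Sf K t).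
Proof.
apply: sol_congr; first by apply: sol_prod => i; apply: Fac_sol.
move=> n hn; rewrite coefB coef_sum coef_poly ltnS hn.
under eq_bigr => i _ do rewrite coefZ coefXn [_%:R * (_ / _)]mulrC divfK ?pnatr_eq0 //.
case: n hn => [|n] hn.
  by rewrite big1 ?subr0 // => i _; rewrite mulr0.
rewrite (bigD1 (Ordinal hn)) //= eqxx mulr1 big1 ?addr0 ?subrr // => i hi.
case: eqP; rewrite ?mulr0 // => [[h]]; move: hi; suff -> : i = Ordinal hn by rewrite eqxx.
by apply: val_inj.
Qed.

Lemma Pt0 K t : (Pt K t)`_0 = 1.
Proof.
rewrite -horner_coef0 horner_prod big1 // => i _.
rewrite horner_sum big_ord_recl /= hornerZ hornerXn muln0 expr0 expr0 mulr1 divr1.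
rewrite big1 ?addr0 // => j _; rewrite hornerZ hornerXn expr0n.
by rewrite (negbTE (_ : (i.+1 * bump 0 j)%N != 0%N)) ?mulr0 // muln_eq0.
Qed.

Lemma Ck_le k t : (forall i, 0 <= t i) -> Ck k t <= k`!%:R * (Pt k t)`_k.
Proof.
move=> ht.
rewrite /Pt /Fac bigA_distr_bigA coef_sum mulr_sumr /Ck big_mkcond /=.
apply: ler_sum => c _.
set u := fun i : 'I_k => t i.+1 / (i.+1)%:R.
have P : (\prod_(i < k) ((u i ^+ c i / (c i)`!%:R) *: 'X^(i.+1 * c i)))`_k =
   (\prod_(i < k) (u i ^+ c i / (c i)`!%:R)) * (k == \sum_(i < k) (i.+1 * c i))%N%:R.
  rewrite (eq_bigr (fun i : 'I_k => (u i ^+ c i / (c i)`!%:R)%:P * 'X^(i.+1 * c i)));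
    last by move=> i _; rewrite mul_polyC.
  by rewrite big_split /= -rmorph_prod prodrXr coefCM coefXn.
rewrite P /cycle_type_ok eq_sym; case: eqP => h; last by rewrite mulr0 mulr0.
rewrite mulr1.
set w := (\prod_(i < k) (i.+1 ^ c i * (c i)`!))%N.
set T := \prod_(i < k) t i.+1 ^+ c i.
have hprod : \prod_(i < k) (u i ^+ c i / (c i)`!%:R) = T / w%:R.
  rewrite natr_prod -prodf_div; apply: eq_bigr => i _.
  by rewrite natrM natrX expr_div_n -mulrA -invfM.
have hw : 0 < w%:R :> R.
  rewrite ltr0n /w prodn_gt0 // => i; by rewrite muln_gt0 expn_gt0 fact_gt0.
have hT : 0 <= T by apply: prodr_ge0 => x _; apply: exprn_ge0.
rewrite hprod.
have -> : k`!%:R * (T / w%:R) = k`!%:R / w%:R * T by rewrite mulrA mulrAC.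
apply: ler_wpM2r => //.
rewrite ler_pdivlMr // -natrM ler_nat /Ncyc; exact: leq_divM.
Qed.

End Fact.
Section Fin.
Variable R : realFieldType.

Lemma fact_rr k (a : R) : k`!%:R * rr a k = \prod_(j < k) (a + j%:R).
Proof.
elim: k => [|k IH]; first by rewrite rr0 big_ord0 mulr1.
rewrite factS natrM rrS big_ord_recr /= -IH.
have h : (k.+1)%:R != 0 :> R by rewrite pnatr_eq0.
have hy : (a + k%:R) / k.+1%:R * k.+1%:R = a + k%:R by rewrite divfK.
move: hy; set y := (a + k%:R) / k.+1%:R; clearbody y => <-; ring.
Qed.

Lemma rr_dvd (m : nat) d x : (0 < d)%N -> (d %| x)%N ->
  rr (m%:R : R) (x %/ d)%N <= rr m%:R x.
Proof.
move=> hd hx; case: (posnP x) => [->|hx0]; first by rewrite div0n.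
case: (posnP m) => [->|mp].
  have : (0 < x %/ d)%N by rewrite divn_gt0 // dvdn_leq.
  case: (x %/ d)%N => // p _.
  rewrite /rr big_ord_recl /= mulr0n add0r mul0r mul0r.
  exact: (rr_ge0 x (ler0n R 0)).
by apply: rr_mono; [rewrite ler1n | exact: leq_div].
Qed.

End Fin.

Theorem mainTheorem5 (R : realFieldType) (s d k q : nat) :
  (0 < s)%N -> (0 < d)%N -> (0 < k)%N -> (0 < q)%N ->
  (s <= q)%N -> (d %| q - s)%N ->
  Ck k (fun i : nat => if (d %| i)%N then q%:R else s%:R : R)
  <= falling (s%:R + k%:R + (q - s)%:R / d%:R - 1) k.
Proof.
move=> hs hd hk hq hsq hdv.
set t := fun i : nat => _.
set m := ((q - s) %/ d)%N.
have hqs : (q - s)%:R / d%:R = m%:R :> R.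
  by rewrite /m -{1}(divnK hdv) natrM mulfK // pnatr_eq0 -lt0n.
have hqm : q = (s + d * m)%N by rewrite /m mulnC divnK // subnKC.
have ht0 : forall i, 0 <= t i by move=> i; rewrite /t; case: ifP.
apply: le_trans (Ck_le k ht0) _.
have H1 : sol k (Rp k s%:R * Bp k d m%:R) (Sf k t).
  have -> : Sf k t = Sf k (fun _ => s%:R) +
      Sf k (fun i => if (d %| i)%N then (d * m)%:R else 0).
    rewrite SfD; apply: Sf_ext => i _; rewrite /t; case: ifP => _; last by rewrite addr0.
    by rewrite -natrD -hqm.
  by apply: solM; [exact: Rp_sol | exact: Bp_sol].
have e1 : (Pt k t)`_k = (Rp k s%:R * Bp k d m%:R)`_k.
  have H0 : (Pt k t)`_0 = (Rp k s%:R * Bp k d m%:R)`_0.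
    by rewrite Pt0 coef0M Rp0 Bp0 mulr1.
  exact: (sol_uniq (@Pt_sol R k t) H1 (Sf0 _ _) H0 (leqnn k)).
have H2 : @sol R k (Rp k s%:R * Rp k m%:R) (Sf k (fun _ => s%:R + m%:R)).
  have L : @lowz R k (Sf k (fun _ => s%:R) + Sf k (fun _ => m%:R) - Sf k (fun _ => s%:R + m%:R)).
    move=> n _; rewrite coefB coefD !coef_poly.
    by case: (n < k.+1)%N; case: (n == 0)%N; rewrite ?addr0 subrr.
  exact (sol_congr (solM (@Rp_sol R k s%:R) (@Rp_sol R k m%:R)) L).
have e2 : (Rp k (s%:R : R) * Rp k m%:R)`_k = (Rp k (s%:R + m%:R))`_k.
  have H0 : (Rp k (s%:R : R) * Rp k m%:R)`_0 = (Rp k (s%:R + m%:R))`_0.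
    by rewrite coef0M !Rp0 mulr1.
  exact: (sol_uniq H2 (@Rp_sol R k _) (Sf0 _ _) H0 (leqnn k)).
have e3 : (Rp k (s%:R : R) * Bp k d m%:R)`_k <= (Rp k s%:R * Rp k m%:R)`_k.
  rewrite !coefM; apply: ler_sum => j _; apply: ler_wpM2l.
    by rewrite coef_poly; case: ifP => // _; apply: rr_ge0; apply: ler0n.
  rewrite !coef_poly; case: ifP => // _; case: ifP => hx.
    exact: rr_dvd.
  by apply: rr_ge0; apply: ler0n.
rewrite e1; apply: le_trans (ler_wpM2l (ler0n _ _) e3) _.
rewrite e2 coef_poly ltnSn fact_rr hqs /falling.
rewrite [leRHS](reindex_inj rev_ord_inj) /=; rewrite le_eqVlt; apply/orP; left; apply/eqP.
apply: eq_bigr => j _; rewrite natrB // -natr1; ring.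
Qed.
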